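(* In the model described in the context, if the threshold satisfies $t\le f$ (i.e. $t$ records from distinct objects suffice to create an evidence), then the a-audit cannot satisfy weak accuracy.
   Context: Model. An asynchronous system has client processes (writers, readers, auditors) and $n$ storage objects $o_1,\dots,o_n$. Each $o_k$ is a loggable read/write register with a log $L_k$. Its rw-read() returns the stored block and appends $\langle p_r,\mathit{label}(b)\rangle$ to $L_k$, where $p_r$ is the reader and $\mathit{label}(b)$ identifies the value from which $b$ was derived; rw-getLog() returns $L_k$. A register over values $\mathbb{V}$ is emulated by information dispersal. An a-write($v$) stores block $b_{v_k}$ of $v$ at $o_k$, and any $\tau$ distinct blocks of $v$ recover $v$. Faults. At most $f$ storage objects are faulty, and a faulty object may, among other behaviours, report in its log records of read operations that never occurred (for arbitrary readers and values). Providing set $P_{p_r,v}$: the set of objects that received a write of $b_{v_k}$ and responded $b_{v_k}$ to a read request of $p_r$. Audit. An a-audit collects logs from an auditing quorum of $n-f$ objects and returns a set $E_A$ of evidences. An evidence $\mathcal{E}_{p_r,v}$ is created (and reported) once at least $t$ records $\langle p_r,\mathit{label}(v)\rangle$ from distinct objects are collected. Weak accuracy: for every correct reader $p_r$ that never invoked an a-read before the audit (so $P_{p_r,v}=\varnothing$), $\mathcal{E}_{p_r,v}\notin E_A$ for all $v$. *)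

(* Defs.v *)
From mathcomp Require Import all_boot.
Set Implicit Arguments. Unset Strict Implicit. Unset Printing Implicit Defensive.

(* An (abstracted) execution of the system, as seen up to the moment of an
   a-audit, with storage objects o_1..o_n represented by 'I_n.
   - [faulty]  : the set of faulty storage objects;
   - [reads p k v] : a read operation of reader p actually occurred at object
     o_k, and o_k responded with the block of value v (i.e. o_k is in the
     providing set P_{p,v});
   - [log k p v] : the log L_k, as returned by rw-getLog(), contains the record
     <p, label(v)> (values are identified with their labels). *)
Record execution (n : nat) (Reader Value : Type) := Exec {
  faulty : {set 'I_n};
  reads  : Reader -> 'I_n -> Value -> Prop;
  log    : 'I_n -> Reader -> Value -> bool
}.

(* Faulty objects may log arbitrary
   records (records of reads that never occurred, for arbitrary readers and
   values). *)
Definition admissible n Reader Value (f : nat) (e : execution n Reader Value) :=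
  #|faulty e| <= f /\
  forall k, k \notin faulty e -> forall p v, log e k p v -> reads e p k v.

(* Reader p invoked some a-read before the audit (some object received its
   read request). If p never invoked an a-read, no read of p occurred, so all
   providing sets P_{p,v} are empty. *)
Definition invoked n Reader Value (e : execution n Reader Value) (p : Reader) :=
  exists k v, reads e p k v.

Definition auditing_quorum n (f : nat) (Q : {set 'I_n}) := #|Q| = n - f.

(* The a-audit with threshold t: the evidence E_{p,v} is in E_A iff at least
   t records <p, label(v)> were collected from distinct objects of the
   auditing quorum Q. *)
Definition in_EA n Reader Value (t : nat) (e : execution n Reader Value)
  (Q : {set 'I_n}) (p : Reader) (v : Value) : Prop :=
  t <= #|[set k in Q | log e k p v]|.

(* Weak accuracy of the threshold-t a-audit: in every admissible execution,
   whatever auditing quorum answers, no evidence E_{p,v} is reported for a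
   reader p that never invoked an a-read. (Readers are not faulty in this
   abstraction, so every reader is correct.) *)
Definition weak_accuracy (Reader Value : Type) (n f t : nat) : Prop :=
  forall (e : execution n Reader Value) (Q : {set 'I_n}),
    admissible f e -> auditing_quorum f Q ->
    forall p, ~ invoked e p -> forall v, ~ in_EA t e Q p v.

(* Main.v *)
Require Import Defs.
From mathcomp Require Import all_boot.

Lemma card_lt n m (H : m <= n) : #|[set k : 'I_n | k < m]| = m.
Proof.
have -> : [set k : 'I_n | k < m] = widen_ord H @: [set: 'I_m].
  apply/setP => k; rewrite inE; apply/idP/imsetP.
    by move=> km; exists (Ordinal km) => //; apply: val_inj.
  by case=> j _ ->; rewrite /= ltn_ord.
rewrite card_imset ?cardsT ?card_ord //.
by move=> a b /(congr1 val) /= ab; apply: val_inj.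
Qed.

Theorem lemma3 (Reader Value : Type) (r0 : Reader) (v0 : Value) (n f t : nat) :
  t <= f -> t + f <= n -> ~ weak_accuracy Reader Value n f t.
Proof.
move=> htf htfn WA.
have htn : t <= n by apply: leq_trans htfn; apply: leq_addr.
have hnf : n - f <= n by apply: leq_subr.
pose e := @Exec n Reader Value [set k : 'I_n | k < t] (fun _ _ _ => False)
   (fun k _ _ => k < t).
have adm : admissible f e.
split; first by rewrite /= card_lt.
by move=> k /=; rewrite inE => /negP.
have AQ : auditing_quorum f [set k : 'I_n | k < n - f].
by rewrite /auditing_quorum card_lt.
apply: (WA e _ adm AQ r0 _ v0).
by case=> k [v []].
rewrite /in_EA /=.
have tnf : t <= n - f.
  have fn : f <= n by apply: leq_trans htfn; apply: leq_addl.
  rewrite leq_subRL; first by rewrite addnC.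
  exact: fn.
have EQ : [set k in [set k0 : 'I_n | k0 < n - f] | k < t] = [set k : 'I_n | k < t].
  apply/setP => k; rewrite !inE andbC.
  case kt: (k < t); last by [].
  by rewrite /= (leq_trans kt tnf).
rewrite EQ.
rewrite card_lt.
exact: leqnn.
exact: htn.
Qed.
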